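(* Let $G$ be a graph with $n\geq 1$ vertices, $m$ edges, and maximum degree at most $\Delta$, where $\Delta$ is a positive integer. Then $$irr(G)\leq \frac{(\Delta n-2m)\Delta m}{\Delta n-m}<\left(3-2\sqrt{2}\right)\Delta^2 n.$$
   Context: All graphs are finite, simple and undirected. For a graph $G$ with edge set $E(G)$ and vertex degrees $d_G(u)$, the irregularity (in the sense of Albertson) is $irr(G)=\sum_{uv\in E(G)}|d_G(u)-d_G(v)|$. *)

(* Defs.v *)
From mathcomp Require Import all_boot all_order all_algebra.
Set Implicit Arguments. Unset Strict Implicit. Unset Printing Implicit Defensive.
Import Order.TTheory GRing.Theory Num.Theory.

(* An (undirected) edge {u,v} is represented once, as the ordered
   pair (u,v) with e u v and enum_rank u < enum_rank v. *)
Definition simple_graph (T : finType) (e : rel T) : Prop :=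
  symmetric e /\ irreflexive e.

Definition deg (T : finType) (e : rel T) (u : T) : nat := #|[set v | e u v]|.

Definition is_edge (T : finType) (e : rel T) (p : T * T) : bool :=
  e p.1 p.2 && (enum_rank p.1 < enum_rank p.2)%N.

Definition nedges (T : finType) (e : rel T) : nat := #|[set p | is_edge e p]|.

Definition irr (T : finType) (e : rel T) : nat :=
  (\sum_(p : T * T | is_edge e p) `|((deg e p.1)%:Z - (deg e p.2)%:Z)%R|%N)%N.

(* Main.v *)
Require Import Defs.
From mathcomp Require Import all_boot all_order all_algebra.
From mathcomp Require Import zify ring lra.
Import Order.TTheory GRing.Theory Num.Theory.
Local Open Scope ring_scope.
Set Implicit Arguments. Unset Strict Implicit.

Definition pswap (T : Type) (p : T * T) : T * T := (p.2, p.1).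

Lemma pswapK (T : Type) : involutive (@pswap T).
Proof. by case. Qed.

Lemma sum_split_edges (V : nmodType) (T : finType) (e : rel T) (g : T * T -> V) :
  simple_graph e ->
  \sum_(p | e p.1 p.2) g p = \sum_(p | is_edge e p) (g p + g (pswap p)).
Proof.
move=> [esym eirr].
rewrite (bigID (fun p : T * T => (enum_rank p.1 < enum_rank p.2)%N)) /=.
rewrite big_split /=; congr (_ + _).
rewrite (reindex_inj (inv_inj (@pswapK T))) /=.
apply: eq_bigl => -[u v] /=; rewrite /is_edge /= esym.
have [->|neq] := eqVneq u v; first by rewrite eirr.
case: (e u v) => //=.
have ne: enum_rank u != enum_rank v by rewrite (inj_eq enum_rank_inj).
have ne2 : (nat_of_ord (enum_rank u) == nat_of_ord (enum_rank v)) = false by apply: negbTE.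
by rewrite -leqNgt leq_eqVlt ne2.
Qed.

Lemma sum_by_vertex (V : nmodType) (T : finType) (e : rel T) (f : T -> V) :
  \sum_(p | e p.1 p.2) f p.1 = \sum_u (f u *+ deg e u).
Proof.
rewrite -(pair_big_dep predT (fun u v => e u v) (fun u _ => f u)) /=.
apply: eq_bigr => u _; rewrite /deg -sumr_const.
by apply: eq_bigl => v; rewrite inE.
Qed.

Lemma sqrt2_irr (R : rcfType) (p q : nat) : (0 < q)%N ->
  Num.sqrt (2 : R) * q%:R != p%:R.
Proof.
move=> q0; apply/eqP => h.
have : (Num.sqrt (2:R) * q%:R) ^+ 2 = p%:R ^+ 2 by rewrite h.
rewrite exprMn sqr_sqrtr ?ler0n // -!natrX -natrM => /eqP; rewrite eqr_nat => /eqP h2.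
have p0 : (0 < p)%N.
  move: h2; case: (p) => // h2; have : (0 < 2 * q ^ 2)%N by rewrite muln_gt0 expn_gt0 q0.
  by rewrite h2.
have := congr1 (logn 2) h2.
rewrite lognM ?expn_gt0 ?q0 // !lognX /=.
have -> : logn 2 2 = 1%N by [].
lia.
Qed.

Lemma edge_term (R : rcfType) (a b Delta : nat) (c : R) :
  (1 <= a)%N -> (1 <= b)%N -> (a <= Delta)%N -> (b <= Delta)%N ->
  (`|(a%:Z - b%:Z)%R|%N)%:R <= Delta%:R - 2 * c - c ^+ 2 / Delta%:R
     + c ^+ 2 * (a%:R^-1 + b%:R^-1) :> R.
Proof.
move=> a1 b1 aD bD.
have key : forall x y : nat, (1 <= x)%N -> (x <= y)%N -> (y <= Delta)%N ->
   (`|(x%:Z - y%:Z)%R|%N)%:R <= Delta%:R - 2 * c - c ^+ 2 / Delta%:R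
     + c ^+ 2 * (x%:R^-1 + y%:R^-1) :> R.
  move=> x y x1 xy yD.
  have -> : (`|(x%:Z - y%:Z)%R|%N) = (y - x)%N by lia.
  rewrite natrB //.
  have xp : (0 : R) < x%:R by rewrite ltr0n.
  have yp : (0 : R) < y%:R by rewrite ltr0n; lia.
  have Dp : (0 : R) < Delta%:R by rewrite ltr0n; lia.
  have h1 : c ^+ 2 / Delta%:R <= c ^+ 2 / y%:R.
    apply: ler_wpM2l; first exact: sqr_ge0.
    by rewrite lef_pV2 ?posrE // ler_nat.
  have h2 : 2 * c <= x%:R + c ^+ 2 / x%:R.
    rewrite -(ler_pM2r xp) [(_ + _ / _) * _]mulrDl divfK ?gt_eqF //.
    have : 0 <= (x%:R - c) ^+ 2 by exact: sqr_ge0.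
    lra.
  have yD' : (y%:R : R) <= Delta%:R by rewrite ler_nat.
  rewrite mulrDr; lra.
have [ab|ba] := leqP a b.
  exact: key.
have -> : (`|(a%:Z - b%:Z)%R|%N) = (`|(b%:Z - a%:Z)%R|%N) by lia.
rewrite [a%:R^-1 + _]addrC; apply: key => //; exact: ltnW.
Qed.

Theorem corollary1 (R : rcfType) (T : finType) (e : rel T) (Delta : nat) :
  simple_graph e ->
  (0 < #|T|)%N ->
  (0 < Delta)%N ->
  (forall u : T, (deg e u <= Delta)%N) ->
  let n : R := (#|T|)%:R in
  let m : R := (nedges e)%:R in
  let D : R := Delta%:R in
  (irr e)%:R <= (D * n - 2 * m) * D * m / (D * n - m) /\
  (D * n - 2 * m) * D * m / (D * n - m) < (3 - 2 * Num.sqrt 2) * D ^+ 2 * n.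
Proof.
move=> sg Tpos Dpos degD n m D.
have Dp : 0 < D by rewrite ltr0n.
have np : 0 < n by rewrite ltr0n.
have mE : m = \sum_(p | is_edge e p) (1 : R).
  rewrite /m /nedges -sumr_const; apply: eq_bigl => p; by rewrite inE.
have hand : 2 * m = \sum_u (deg e u)%:R.
  have E1 := sum_split_edges (fun _ => (1:R)) sg.
  have E2 := sum_by_vertex e (fun _ => (1:R)).
  rewrite -E2 E1 mE mulr_sumr; apply: eq_bigr => p _; by rewrite mulr1.
have nE : n = \sum_(u : T) (1 : R) by rewrite sumr_const.
have mle : 2 * m <= D * n.
  rewrite hand nE mulr_sumr; apply: ler_sum => u _; rewrite mulr1 ler_nat; exact: degD.
have m0 : 0 <= m by rewrite ler0n.
have yp : 0 < D * n by rewrite mulr_gt0.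
have hz : 0 < D * n - m by lra.
set c := D * m / (D * n - m).
have inv_sum : \sum_(p | is_edge e p) ((deg e p.1)%:R^-1 + (deg e p.2)%:R^-1) <= n.
  have E := sum_split_edges (fun p => (deg e p.1)%:R^-1 : R) sg.
  simpl in E; rewrite -E (sum_by_vertex e (fun u => (deg e u)%:R^-1 : R)) nE; apply: ler_sum => u _.
  case: (deg e u) => [|k]; first by rewrite mulr0n.
  have -> : ((k.+1)%:R : R)^-1 *+ k.+1 = ((k.+1)%:R)^-1 * (k.+1)%:R by rewrite mulr_natr.
  by rewrite mulVf // pnatr_eq0.
have degpos : forall u v, e u v -> (1 <= deg e u)%N.
  move=> u v euv; apply/card_gt0P; exists v; by rewrite inE.
have main : (irr e)%:R <= \sum_(p | is_edge e p)
    (D - 2 * c - c ^+ 2 / D + c ^+ 2 * ((deg e p.1)%:R^-1 + (deg e p.2)%:R^-1)).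
  rewrite /irr natr_sum; apply: ler_sum => p /andP [ep _].
  apply: edge_term; try exact: degD.
    exact: degpos ep.
  apply: (degpos _ p.1); rewrite (proj1 sg); exact: ep.
have KE : \sum_(p | is_edge e p) (D - 2 * c - c ^+ 2 / D) = (D - 2 * c - c ^+ 2 / D) * m.
  rewrite mE mulr_sumr; apply: eq_bigr => p _; by rewrite mulr1.
rewrite big_split /= KE -mulr_sumr in main.
have c2 : 0 <= c ^+ 2 by exact: sqr_ge0.
have main2 : (irr e)%:R <= (D - 2 * c - c ^+ 2 / D) * m + c ^+ 2 * n.
  apply: (le_trans main); rewrite lerD2l; exact: ler_wpM2l.
split.
  apply: (le_trans main2); rewrite le_eqVlt; apply/orP; left; apply/eqP.
  rewrite /c; field.
  by apply/andP; split; [rewrite gt_eqF | rewrite gt_eqF].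
rewrite ltr_pdivrMr //.
set s := Num.sqrt (2 : R).
have s2 : s ^+ 2 = 2 by rewrite sqr_sqrtr // ler0n.
have mnat : (nedges e <= Delta * #|T|)%N.
  rewrite -(ler_nat R) natrM; lra.
have zE : D * n - m = (Delta * #|T| - nedges e)%N%:R by rewrite natrB // natrM.
have zpos : (0 < Delta * #|T| - nedges e)%N by rewrite -(ltr0n R) -zE.
have hne := sqrt2_irr R (Delta * #|T|) zpos.
have sq : 0 < (s * (D * n - m) - D * n) ^+ 2.
  rewrite lt_def sqr_ge0 andbT sqrf_eq0 subr_eq0 zE /D /n -natrM; exact: hne.
rewrite -subr_gt0.
have -> : (3 - 2 * s) * D ^+ 2 * n * (D * n - m) - (D * n - 2 * m) * D * m
   = D * (s * (D * n - m) - D * n) ^+ 2 + D * (2 - s ^+ 2) * (D * n - m) ^+ 2 by ring.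
by rewrite s2 subrr mulr0 mul0r addr0 mulr_gt0.
Qed.
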